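(* Let $L_0\in\mathbb{R}^{n\times n}$ have reduced SVD $L_0=U\Sigma V^*$, let $\lambda>0$, let $\Omega_{\mathrm{obs}}\subset[n]\times[n]$, let $\Omega\subset\Omega_{\mathrm{obs}}$, let $\Gamma=\Omega_{\mathrm{obs}}\setminus\Omega$, and let $S_0'$ be a matrix supported on $\Omega$. Assume $\|\mathcal{P}_{\Gamma^\perp}\mathcal{P}_T\|<1$. Then $(L_0,S_0')$ is the unique solution of \[ \text{minimize } \|L\|_*+\lambda\|S\|_1\quad\text{subject to}\quad\mathcal{P}_{\Omega_{\mathrm{obs}}}(L+S)=\mathcal{P}_{\Omega_{\mathrm{obs}}}L_0+S_0' \] if there is a pair $(W,F)$ obeying \[ UV^*+W=\lambda(\mathrm{sgn}(S_0')+F), \] with $\mathcal{P}_TW=0$, $\|W\|<1$, $\mathcal{P}_{\Gamma^\perp}F=0$ and $\|F\|_\infty<1$.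
   Context: $U,V\in\mathbb{R}^{n\times r}$ have orthonormal columns; $T=\{UX^*+YV^*: X,Y\in\mathbb{R}^{n\times r}\}$ and $\mathcal{P}_T$ is the orthogonal projection onto $T$ (trace inner product). For an index set $A$, $\mathcal{P}_A$ keeps entries in $A$ and zeroes the rest; $\mathcal{P}_{\Gamma^\perp}=\mathcal{I}-\mathcal{P}_\Gamma$ keeps the entries outside $\Gamma$. $\|\mathcal{P}_{\Gamma^\perp}\mathcal{P}_T\|$ is the operator norm w.r.t. the Frobenius norm; $\|W\|$ is the spectral norm, $\|F\|_\infty=\max_{ij}|F_{ij}|$, $\|\cdot\|_*$ the nuclear norm, $\|S\|_1=\sum_{ij}|S_{ij}|$, $\mathrm{sgn}$ the entrywise sign with $\mathrm{sgn}(0)=0$. *)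

(* Defs.v *)
From HB Require Import structures.
From mathcomp Require Import all_boot all_order all_algebra.
From mathcomp Require Import boolp classical_sets reals.
Set Implicit Arguments. Unset Strict Implicit. Unset Printing Implicit Defensive.
Import Order.TTheory GRing.Theory Num.Theory.
Local Open Scope ring_scope.
Local Open Scope classical_set_scope.

Section Defs.
Variable R : realType.

Definition mxdot (m n : nat) (A B : 'M[R]_(m, n)) : R := \tr (A^T *m B).

Definition frob (m n : nat) (A : 'M[R]_(m, n)) : R :=
  Num.sqrt (\sum_i \sum_j (A i j) ^+ 2).

Definition vnorm (n : nat) (x : 'cV[R]_n) : R := Num.sqrt (\sum_i (x i 0) ^+ 2).

Definition specnorm (m n : nat) (A : 'M[R]_(m, n)) : R :=
  sup [set vnorm (A *m x) | x in [set x : 'cV[R]_n | vnorm x = 1]].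

Definition psd (n : nat) (P : 'M[R]_n) : Prop :=
  P^T = P /\ forall x : 'cV[R]_n, 0 <= (x^T *m P *m x) 0 0.

Definition sqrtm (n : nat) (A : 'M[R]_n) : 'M[R]_n :=
  xget 0 [set P : 'M[R]_n | psd P /\ P *m P = A].

(* nuclear norm ||L||_* = tr sqrt(L^* L) = sum of singular values *)
Definition nucnorm (m n : nat) (L : 'M[R]_(m, n)) : R := \tr (sqrtm (L^T *m L)).

Definition l1norm (m n : nat) (S : 'M[R]_(m, n)) : R := \sum_i \sum_j `|S i j|.
Definition linfnorm (m n : nat) (F : 'M[R]_(m, n)) : R :=
  \big[Num.max/0]_i \big[Num.max/0]_j `|F i j|.
Definition sgnmx (m n : nat) (S : 'M[R]_(m, n)) : 'M[R]_(m, n) :=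
  \matrix_(i, j) Num.sg (S i j).

Definition PA (n : nat) (A : {set 'I_n * 'I_n}) (M : 'M[R]_n) : 'M[R]_n :=
  \matrix_(i, j) (if (i, j) \in A then M i j else 0).

Definition PAperp (n : nat) (A : {set 'I_n * 'I_n}) (M : 'M[R]_n) : 'M[R]_n :=
  M - PA A M.

Definition inT (n r : nat) (U V : 'M[R]_(n, r)) (M : 'M[R]_n) : Prop :=
  exists X Y : 'M[R]_(n, r), M = U *m X^T + Y *m V^T.

Definition PT (n r : nat) (U V : 'M[R]_(n, r)) (M : 'M[R]_n) : 'M[R]_n :=
  xget 0 [set P : 'M[R]_n | inT U V P /\
                            forall Q, inT U V Q -> mxdot (M - P) Q = 0].

Definition opnorm_frob (n : nat) (f : 'M[R]_n -> 'M[R]_n) : R :=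
  sup [set frob (f M) | M in [set M : 'M[R]_n | frob M <= 1]].

End Defs.

(* Main.v *)
Require Import Defs.
From HB Require Import structures.
From mathcomp Require Import all_boot all_order all_algebra.
From mathcomp Require Import boolp classical_sets reals.
From mathcomp Require Import complex.
From mathcomp Require Import ring lra.
Import Order.TTheory GRing.Theory Num.Theory.

Module MA1.
Set Implicit Arguments. Unset Strict Implicit. Unset Printing Implicit Defensive.
Local Open Scope ring_scope.

Section Spec.
Variable R : realType.
Local Notation toC := (real_complex R).

Lemma map_conj_toC m n (A : 'M[R]_(m, n)) :
  map_mx conjc (map_mx toC A) = map_mx toC A.
Proof. by apply/matrixP => i j; rewrite !mxE conjc_real. Qed.

Lemma sym_eig_in (n k : nat) (A : 'M[R]_n) (B : 'M[R]_(k, n)) (C : 'M[R]_k) :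
  A^T = A -> (0 < k)%N -> row_free B -> B *m A = C *m B ->
  exists2 x : 'rV[R]_n, x != 0 & ((x <= B)%MS /\ exists mu, x *m A = mu *: x).
Proof.
move=> symA k_gt0 frB BAC.
have [z] := eigenvalue_closed (map_mx toC C) k_gt0.
move=> /eigenvalueP [u uCz u_neq0].
set w := u *m map_mx toC B.
have w_neq0 : w != 0 by rewrite mulmx_free_eq0 ?row_free_map.
have wA : w *m map_mx toC A = z *: w.
  by rewrite /w -mulmxA -map_mxM BAC map_mxM mulmxA uCz scalemxAl.
clearbody w.
set wc := map_mx conjc w.
have wcA : wc *m map_mx toC A = z^* *: wc.
  by rewrite /wc -(map_conj_toC A) -map_mxM wA map_mxZ.
have E1 : w *m map_mx toC A *m wc^T = z *: (w *m wc^T) by rewrite wA scalemxAl.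
have E2 : w *m map_mx toC A *m wc^T = z^* *: (w *m wc^T).
  rewrite -mulmxA -[map_mx toC A *m wc^T]trmxK trmx_mul trmxK.
  have -> : (map_mx toC A)^T = map_mx toC A.
    by apply/matrixP => i j; rewrite !mxE -{1}symA mxE.
  by rewrite wcA linearZ /= scalemxAr.
have N_neq0 : (w *m wc^T) 0 0 != 0.
  have [j wj] : exists j, w 0 j != 0.
    case: (pickP (fun j => w 0 j != 0)) => [j wj|H]; first by exists j.
    exfalso; move/negP: w_neq0; apply; apply/eqP/rowP => j; rewrite [X in _ = X]mxE.
    by move: (H j) => /= /negbFE/eqP.
  rewrite mxE.
  apply: lt0r_neq0.
  rewrite (bigD1 j) //= ltr_pwDl ?mxE ?mul_conjC_gt0 //.
  by apply: sumr_ge0 => i _; rewrite !mxE mul_conjC_ge0.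
have zr : z^* = z.
  move: E1; rewrite E2 => /matrixP/(_ 0 0); rewrite [LHS]mxE [RHS]mxE => /eqP.
  by rewrite -subr_eq0 -mulrBl mulf_eq0 (negPf N_neq0) orbF subr_eq0 => /eqP.
clear E1 E2 wA wcA N_neq0 wc w_neq0 w.
move: z zr uCz => [a b] /= [] b0 uCz.
have {b0} b0 : b = 0 by lra.
subst b.
have : eigenvalue (map_mx toC C) (toC a).
  by apply/eigenvalueP; exists u.
rewrite eigenvalue_root_char -map_char_poly fmorph_root -eigenvalue_root_char.
move=> /eigenvalueP [v vC v_neq0].
exists (v *m B); first by rewrite mulmx_free_eq0.
split; first exact: submxMl.
by exists a; rewrite -mulmxA BAC mulmxA vC scalemxAl.
Qed.

Definition orth_eig n (A : 'M[R]_n) k :=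
  exists O : 'M[R]_(k, n), exists d : 'rV[R]_k,
    O *m O^T = 1%:M /\ O *m A = diag_mx d *m O.

Lemma orth_eig_le n (A : 'M[R]_n) : A^T = A ->
  forall k, (k <= n)%N -> orth_eig A k.
Proof.
move=> symA; elim=> [|k IH] hk.
  exists 0, 0; split; first by apply/matrixP => i [].
  by apply/matrixP => [[]].
have [O [d [OO OA]]] := IH (ltnW hk).
have rkO : \rank O = k.
  apply/eqP; rewrite eqn_leq rank_leq_row /=.
  by rewrite -{1}(mxrank1 R k) -OO mxrankM_maxl.
set K := kermx O^T.
have rkK : \rank K = (n - k)%N by rewrite mxrank_ker mxrank_tr rkO.
have KA : (row_base K *m A <= row_base K)%MS.
  rewrite eq_row_base sub_kermx.
  have /sub_kermxP BO : (row_base K <= K)%MS by rewrite eq_row_base.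
  rewrite -mulmxA -{1}symA -trmx_mul OA trmx_mul tr_diag_mx mulmxA BO mul0mx //.
have [C BAC] := submxP KA.
have kK : (0 < \rank K)%N by rewrite rkK subn_gt0.
have [x x0 [xK [mu xA]]] := sym_eig_in symA kK (row_base_free K) BAC.
have xO : x *m O^T = 0.
  by apply/sub_kermxP; rewrite -/K -(eq_row_base K).
set nx := (x *m x^T) 0 0.
have nx_gt0 : 0 < nx.
  rewrite /nx mxE; have [j xj] : exists j, x 0 j != 0.
    case: (pickP (fun j => x 0 j != 0)) => [j xj|H]; first by exists j.
    exfalso; move/negP: x0; apply; apply/eqP/rowP => j; rewrite [X in _ = X]mxE.
    by move: (H j) => /= /negbFE/eqP.
  rewrite (bigD1 j) //= ltr_pwDl //.
    by rewrite mxE -expr2 lt0r sqr_ge0 andbT sqrf_eq0.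
  by apply: sumr_ge0 => i _; rewrite !mxE -expr2 sqr_ge0.
pose c := Num.sqrt nx.
have c_gt0 : 0 < c by rewrite sqrtr_gt0.
pose y := c^-1 *: x.
have yy : y *m y^T = 1%:M.
  rewrite /y linearZ /= -scalemxAl -scalemxAr scalerA [x *m _]mx11_scalar -/nx.
  rewrite scale_scalar_mx -invfM -expr2 sqr_sqrtr ?ltW // mulVf ?gt_eqF //.
have yO : y *m O^T = 0 by rewrite /y -scalemxAl xO scaler0.
have yA : y *m A = mu *: y by rewrite /y -scalemxAl xA scalerA mulrC -scalerA.
rewrite -addn1; exists (col_mx O y), (row_mx d (mu%:M)); split.
  rewrite tr_col_mx mul_col_row OO yy yO -(trmxK (O *m y^T)) trmx_mul trmxK yO.
  by rewrite trmx0 [RHS]scalar_mx_block.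
rewrite mul_col_mx diag_mx_row mul_block_col OA yA !mul0mx addr0 add0r.
congr col_mx; apply/matrixP => i j; rewrite !ord1 !mxE.
by rewrite big_ord1 !mxE eqxx mulr1n.
Qed.

End Spec.

End MA1.
Import MA1.

Module MB.
Set Implicit Arguments. Unset Strict Implicit. Unset Printing Implicit Defensive.
Local Open Scope ring_scope.

Section Vec.
Variable R : realType.

Lemma sum_sq0 (I : finType) (f : I -> R) :
  \sum_i f i ^+ 2 = 0 -> forall i, f i = 0.
Proof.
move=> H i; have := @psumr_eq0P _ _ predT (fun i => f i ^+ 2).
by move=> /(_ (fun i _ => sqr_ge0 _) H i isT) /eqP; rewrite sqrf_eq0 => /eqP.
Qed.

Lemma CS_sum (I : finType) (f g : I -> R) :
  \sum_i f i * g i <= Num.sqrt (\sum_i f i ^+ 2) * Num.sqrt (\sum_i g i ^+ 2).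
Proof.
set a := Num.sqrt _; set b := Num.sqrt _.
have Fge : 0 <= \sum_i f i ^+ 2 by apply: sumr_ge0 => i _; apply: sqr_ge0.
have Gge : 0 <= \sum_i g i ^+ 2 by apply: sumr_ge0 => i _; apply: sqr_ge0.
have ha : a ^+ 2 = \sum_i f i ^+ 2 by rewrite sqr_sqrtr.
have hb : b ^+ 2 = \sum_i g i ^+ 2 by rewrite sqr_sqrtr.
have a_ge0 : 0 <= a by apply: sqrtr_ge0.
have b_ge0 : 0 <= b by apply: sqrtr_ge0.
have key : 0 <= 2 * (a * b) * (a * b - \sum_i f i * g i).
  have : 0 <= \sum_i (b * f i - a * g i) ^+ 2 by apply: sumr_ge0 => i _; apply: sqr_ge0.
  have -> : \sum_i (b * f i - a * g i) ^+ 2 =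
     \sum_i (b ^+ 2 * f i ^+ 2 + (a ^+ 2 * g i ^+ 2 - 2 * (a * b) * (f i * g i))).
    by apply: eq_bigr => i _; ring.
  rewrite big_split sumrB /= -!mulr_sumr -ha -hb.
  suff -> : b ^+ 2 * a ^+ 2 + (a ^+ 2 * b ^+ 2 - 2 * (a * b) * \sum_i f i * g i) =
            2 * (a * b) * (a * b - \sum_i f i * g i) by [].
  ring.
have [ab0|ab_gt0] := eqVneq (a * b) 0.
  move: ab0 => /eqP; rewrite mulf_eq0 => /orP [] /eqP h0.
    have f0 : forall i, f i = 0 by apply: sum_sq0; rewrite -ha h0 expr0n.
    by rewrite h0 mul0r big1 // => i _; rewrite f0 mul0r.
  have g0 : forall i, g i = 0 by apply: sum_sq0; rewrite -hb h0 expr0n.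
  by rewrite h0 mulr0 big1 // => i _; rewrite g0 mulr0.
have abp : 0 < a * b by rewrite lt0r ab_gt0 mulr_ge0.
rewrite -subr_ge0; move: key; rewrite pmulr_rge0 //.
by rewrite mulr_gt0.
Qed.

Definition nsq n (x : 'cV[R]_n) := (x^T *m x) 0 0.

Lemma dotE n (u v : 'cV[R]_n) : (u^T *m v) 0 0 = \sum_i u i 0 * v i 0.
Proof. by rewrite mxE; apply: eq_bigr => i _; rewrite mxE. Qed.

Lemma nsqE n (x : 'cV[R]_n) : nsq x = \sum_i x i 0 ^+ 2.
Proof. by rewrite /nsq dotE; apply: eq_bigr => i _; rewrite expr2. Qed.

Lemma vnormE n (x : 'cV[R]_n) : vnorm x = Num.sqrt (nsq x).
Proof. by rewrite nsqE. Qed.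

Lemma nsq_ge0 n (x : 'cV[R]_n) : 0 <= nsq x.
Proof. by rewrite nsqE; apply: sumr_ge0 => i _; apply: sqr_ge0. Qed.

Lemma nsq_eq0 n (x : 'cV[R]_n) : nsq x = 0 -> x = 0.
Proof.
rewrite nsqE => /sum_sq0 h; apply/matrixP => i j.
by rewrite ord1 h mxE.
Qed.

Lemma vnorm_ge0 n (x : 'cV[R]_n) : 0 <= vnorm x.
Proof. exact: sqrtr_ge0. Qed.

Lemma sqr_vnorm n (x : 'cV[R]_n) : vnorm x ^+ 2 = nsq x.
Proof. by rewrite vnormE sqr_sqrtr // nsq_ge0. Qed.

Lemma dotC n (u v : 'cV[R]_n) : (u^T *m v) 0 0 = (v^T *m u) 0 0.
Proof. by rewrite !dotE; apply: eq_bigr => i _; rewrite mulrC. Qed.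

Lemma CS n (u v : 'cV[R]_n) : (u^T *m v) 0 0 <= vnorm u * vnorm v.
Proof. by rewrite dotE; apply: CS_sum. Qed.

Lemma nsqD n (u v : 'cV[R]_n) :
  nsq (u + v) = nsq u + 2 * (u^T *m v) 0 0 + nsq v.
Proof.
rewrite !nsqE dotE mulr_sumr -!big_split /=; apply: eq_bigr => i _.
by rewrite mxE; ring.
Qed.

Lemma nsqZ n c (u : 'cV[R]_n) : nsq (c *: u) = c ^+ 2 * nsq u.
Proof.
rewrite !nsqE mulr_sumr; apply: eq_bigr => i _.
by rewrite mxE; ring.
Qed.

Lemma vnormZ n c (u : 'cV[R]_n) : vnorm (c *: u) = `|c| * vnorm u.
Proof. by rewrite !vnormE nsqZ sqrtrM ?sqr_ge0 // sqrtr_sqr. Qed.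

Lemma vnormD n (u v : 'cV[R]_n) : vnorm (u + v) <= vnorm u + vnorm v.
Proof.
rewrite -(@ler_pXn2r _ 2) ?nnegrE ?addr_ge0 ?vnorm_ge0 //.
rewrite sqr_vnorm nsqD sqrrD !sqr_vnorm.
have := CS u v; lra.
Qed.

End Vec.

End MB.
Import MB.

Module MC.
Set Implicit Arguments. Unset Strict Implicit. Unset Printing Implicit Defensive.
Local Open Scope ring_scope.

Section Nuc.
Variable R : realType.

Lemma entry_rc m n p (A : 'M[R]_(m, n)) (B : 'M[R]_(n, p)) i j :
  (A *m B) i j = (row i A *m col j B) 0 0.
Proof. by rewrite !mxE; apply: eq_bigr => k _; rewrite !mxE. Qed.

Lemma spec_sym n (A : 'M[R]_n) : A^T = A ->
  exists O : 'M[R]_n, exists d : 'rV[R]_n,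
    [/\ O *m O^T = 1%:M, O^T *m O = 1%:M & A = O^T *m diag_mx d *m O].
Proof.
move=> symA; have [O [d [OO OA]]] := orth_eig_le symA (leqnn n).
have OO' := mulmx1C OO.
exists O, d; split => //.
by rewrite -mulmxA -OA mulmxA OO' mul1mx.
Qed.

Lemma quad_diag m n (B : 'M[R]_(m, n)) (d : 'rV[R]_m) (x : 'cV[R]_n) :
  (x^T *m (B^T *m diag_mx d *m B) *m x) 0 0 = \sum_i d 0 i * (B *m x) i 0 ^+ 2.
Proof.
rewrite !mulmxA -trmx_mul -!mulmxA mulmxA entry_rc.
rewrite mxE; apply: eq_bigr => i _.
rewrite mul_mx_diag [row _ _ _ _]mxE [col _ _ _ _]mxE [(\matrix_(_, _) _) _ _]mxE.
by rewrite [_^T _ _]mxE expr2 mulrCA mulrA.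
Qed.

Lemma psd_spec n (M : 'M[R]_n) : psd M ->
  exists O : 'M[R]_n, exists d : 'rV[R]_n,
    [/\ O *m O^T = 1%:M, O^T *m O = 1%:M, M = O^T *m diag_mx d *m O &
        forall i, 0 <= d 0 i].
Proof.
move=> [symM psdM]; have [O [d [OO OO' Me]]] := spec_sym symM.
exists O, d; split => // i.
have := psdM (col i O^T).
have -> : (col i O^T)^T *m M *m col i O^T = ((O *m M *m O^T) i i)%:M.
  by rewrite [LHS]mx11_scalar; congr (_%:M); rewrite [RHS]entry_rc row_mul tr_col trmxK.
rewrite Me !mulmxA OO mul1mx -!mulmxA OO mulmx1 !mxE eqxx mulr1n.
by [].
Qed.

Lemma psd_null n (M : 'M[R]_n) (x : 'cV[R]_n) : psd M ->
  (x^T *m M *m x) 0 0 = 0 -> M *m x = 0.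
Proof.
move=> pM; have [O [d [OO OO' Me d_ge0]]] := psd_spec pM.
rewrite Me quad_diag => H.
have H0 : forall i, d 0 i * (O *m x) i 0 = 0.
  move=> i; have := @psumr_eq0P _ _ predT (fun i => d 0 i * (O *m x) i 0 ^+ 2).
  move=> /(_ (fun i _ => mulr_ge0 (d_ge0 i) (sqr_ge0 _)) H i isT) /eqP.
  rewrite mulf_eq0 sqrf_eq0 => /orP [] /eqP ->; by rewrite ?mul0r ?mulr0.
rewrite -!mulmxA.
have -> : diag_mx d *m (O *m x) = 0.
  apply/matrixP => i j; rewrite ord1 mul_diag_mx [LHS]mxE H0 mxE.
  by []. by rewrite mulmx0.
Qed.

Lemma tr_quad n (M B : 'M[R]_n) : psd M ->
  0 <= \tr (B^T *m M *m B) /\ (\tr (B^T *m M *m B) = 0 -> M *m B = 0).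
Proof.
move=> pM.
have E : \tr (B^T *m M *m B) = \sum_i ((col i B)^T *m M *m col i B) 0 0.
  rewrite /mxtrace; apply: eq_bigr => i _.
  by rewrite [LHS]entry_rc row_mul tr_col.
have ge : forall i, 0 <= ((col i B)^T *m M *m col i B) 0 0 by move=> i; apply: pM.2.
rewrite E; split; first by apply: sumr_ge0.
move=> H; apply/matrixP => i j.
have := @psumr_eq0P _ _ predT _ (fun i _ => ge i) H j isT.
move=> /(psd_null pM); rewrite colE mulmxA -colE => /matrixP /(_ i 0).
by rewrite !mxE.
Qed.

Lemma psd_uniq n (P Q : 'M[R]_n) : psd P -> psd Q -> P *m P = Q *m Q -> P = Q.
Proof.
move=> pP pQ PQ.
set D := P - Q.
have symD : D^T = D by rewrite /D linearB /= pP.1 pQ.1.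
have E : P *m D + D *m Q = 0.
  by rewrite /D mulmxBr mulmxBl PQ addrA subrK subrr.
have E2 : \tr (D^T *m P *m D) + \tr (D^T *m Q *m D) = 0.
  rewrite symD -[D *m P *m D]mulmxA (mxtrace_mulC (D *m Q) D).
  by rewrite -mxtraceD -mulmxDr E mulmx0 mxtrace0.
have [g1 h1] := tr_quad D pP; have [g2 h2] := tr_quad D pQ.
have t1 : \tr (D^T *m P *m D) = 0 by lra.
have t2 : \tr (D^T *m Q *m D) = 0 by lra.
have DD : D^T *m D = 0 by rewrite symD {1}/D mulmxBl (h1 t1) (h2 t2) subrr.
apply/eqP; rewrite -subr_eq0 -/D; apply/eqP/matrixP => i j.
have : (D^T *m D) j j = 0 by rewrite DD mxE.
rewrite mxE => /eqP; rewrite psumr_eq0 => [/allP /(_ i) |k _].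
  by rewrite mem_index_enum mxE -expr2 sqrf_eq0 [RHS]mxE => /(_ isT) /eqP.
by rewrite mxE -expr2 sqr_ge0.
Qed.


Lemma psd_sqrt_exists n (L : 'M[R]_n) : exists P, psd P /\ P *m P = L^T *m L.
Proof.
have symA : (L^T *m L)^T = L^T *m L by rewrite trmx_mul trmxK.
have [O [d [OO OO' Ae]]] := spec_sym symA.
have d_ge0 : forall i, 0 <= d 0 i.
  move=> i.
  have : O *m (L^T *m L) *m O^T = diag_mx d.
    by rewrite Ae !mulmxA OO mul1mx -mulmxA OO mulmx1.
  have -> : O *m (L^T *m L) *m O^T = (L *m O^T)^T *m (L *m O^T).
    by rewrite trmx_mul trmxK !mulmxA.
  move=> /matrixP /(_ i i); rewrite [RHS]mxE eqxx mulr1n => <-.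
  by rewrite mxE; apply: sumr_ge0 => k _; rewrite mxE -expr2 sqr_ge0.
pose s := \row_j Num.sqrt (d 0 j).
exists (O^T *m diag_mx s *m O); split; [split|].
- by rewrite !trmx_mul trmxK tr_diag_mx mulmxA.
- move=> x; rewrite quad_diag; apply: sumr_ge0 => i _.
  by rewrite mulr_ge0 ?sqr_ge0 // mxE sqrtr_ge0.
- rewrite Ae !mulmxA -[O^T *m diag_mx s *m O *m O^T]mulmxA OO mulmx1.
  rewrite -[O^T *m diag_mx s *m diag_mx s]mulmxA mulmx_diag.
  do 2 congr (_ *m _); congr diag_mx; apply/rowP => j.
  by rewrite !mxE -expr2 sqr_sqrtr.
Qed.

Lemma diag_delta n (d : 'rV[R]_n) i :
  diag_mx d *m delta_mx i 0 = d 0 i *: (delta_mx i 0 : 'cV[R]_n).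
Proof.
apply/matrixP => a b; rewrite mul_diag_mx !mxE.
by case: (eqVneq a i) => [->|ai]; rewrite ?andFb ?mulr0 ?mulr1n.
Qed.

Lemma nuc_ge n (L Z : 'M[R]_n) :
  (forall x : 'cV[R]_n, vnorm (Z *m x) <= vnorm x) -> mxdot Z L <= nucnorm L.
Proof.
move=> HZ.
have [pP PP] : psd (sqrtm (L^T *m L)) /\ sqrtm (L^T *m L) *m sqrtm (L^T *m L) = L^T *m L.
  exact: (xgetPex 0 (psd_sqrt_exists L)).
rewrite /nucnorm; set P := sqrtm _ in pP PP *.
have [O [d [OO OO' Pe d_ge0]]] := psd_spec pP.
have -> : \tr P = \sum_i d 0 i.
  by rewrite Pe mxtrace_mulC mulmxA OO mul1mx mxtrace_diag.
have rc : forall i, row i O = (col i O^T)^T by move=> i; rewrite tr_col trmxK.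
have -> : mxdot Z L = \sum_i ((Z *m col i O^T)^T *m (L *m col i O^T)) 0 0.
  rewrite /mxdot -[Z^T *m L]mulmx1 -OO' !mulmxA mxtrace_mulC !mulmxA /mxtrace.
  apply: eq_bigr => i _.
  by rewrite [LHS]entry_rc !row_mul rc trmx_mul !mulmxA.
apply: ler_sum => i _.
set c := col i O^T.
have nc : vnorm c = 1.
  rewrite vnormE /nsq -rc -entry_rc OO mxE eqxx mulr1n.
  by rewrite sqrtr1.
have Pc : P *m c = d 0 i *: c.
  rewrite /c colE mulmxA Pe -[O^T *m diag_mx d *m O *m O^T]mulmxA OO mulmx1 -mulmxA diag_delta.
  by rewrite -scalemxAr -colE.
have nLc : vnorm (L *m c) = d 0 i.
  rewrite vnormE /nsq trmx_mul -mulmxA [L^T *m _]mulmxA -PP.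
  rewrite -mulmxA mulmxA -{1}pP.1 -trmx_mul Pc -/(nsq _) nsqZ.
  rewrite -sqr_vnorm nc expr1n mulr1 sqrtr_sqr ger0_norm //.
apply: le_trans (CS _ _) _.
rewrite nLc -{2}(mul1r (d 0 i)) ler_wpM2r //.
by rewrite -nc HZ.
Qed.

Lemma nuc_svd n r (U V : 'M[R]_(n, r)) (sigma : 'rV[R]_r) :
  U^T *m U = 1%:M -> V^T *m V = 1%:M -> (forall k, 0 <= sigma 0 k) ->
  nucnorm (U *m diag_mx sigma *m V^T) = \sum_k sigma 0 k.
Proof.
move=> UU VV sg.
set L0 := U *m _ *m _.
set P0 := V *m diag_mx sigma *m V^T.
have pP0 : psd P0.
  split; first by rewrite /P0 !trmx_mul trmxK tr_diag_mx mulmxA.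
  move=> x; rewrite /P0 -{1}(trmxK V) quad_diag; apply: sumr_ge0 => i _.
  by rewrite mulr_ge0 ?sqr_ge0.
have E : P0 *m P0 = L0^T *m L0.
  rewrite /P0 /L0 !trmx_mul trmxK tr_diag_mx !mulmxA.
  rewrite -[V *m diag_mx sigma *m V^T *m V]mulmxA VV mulmx1.
  by rewrite -[V *m diag_mx sigma *m U^T *m U]mulmxA UU mulmx1.
have [pP PP] : psd (sqrtm (L0^T *m L0)) /\ sqrtm (L0^T *m L0) *m sqrtm (L0^T *m L0) = L0^T *m L0.
  exact: (xgetPex 0 (psd_sqrt_exists L0)).
rewrite /nucnorm (psd_uniq pP pP0 (etrans PP (esym E))).
by rewrite /P0 mxtrace_mulC mulmxA VV mul1mx mxtrace_diag.
Qed.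

End Nuc.

End MC.
Import MC.

Module MD.
Set Implicit Arguments. Unset Strict Implicit. Unset Printing Implicit Defensive.
Local Open Scope ring_scope.
Local Open Scope classical_set_scope.

Section Frob.
Variable R : realType.

Lemma mxdotE m n (A B : 'M[R]_(m, n)) :
  mxdot A B = \sum_i \sum_j A i j * B i j.
Proof.
rewrite /mxdot /mxtrace exchange_big; apply: eq_bigr => j _.
by rewrite mxE; apply: eq_bigr => i _; rewrite mxE.
Qed.

Lemma mxdotC m n (A B : 'M[R]_(m, n)) : mxdot A B = mxdot B A.
Proof. by rewrite !mxdotE; apply: eq_bigr => i _; apply: eq_bigr => j _; rewrite mulrC. Qed.

Lemma mxdotDr m n (A B C : 'M[R]_(m, n)) : mxdot A (B + C) = mxdot A B + mxdot A C.
Proof. by rewrite /mxdot mulmxDr mxtraceD. Qed.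

Lemma mxdotDl m n (A B C : 'M[R]_(m, n)) : mxdot (B + C) A = mxdot B A + mxdot C A.
Proof. by rewrite !(mxdotC _ A) mxdotDr. Qed.

Lemma mxdotZr m n c (A B : 'M[R]_(m, n)) : mxdot A (c *: B) = c * mxdot A B.
Proof. by rewrite /mxdot -scalemxAr mxtraceZ. Qed.

Lemma mxdotZl m n c (A B : 'M[R]_(m, n)) : mxdot (c *: B) A = c * mxdot B A.
Proof. by rewrite !(mxdotC _ A) mxdotZr. Qed.

Lemma mxdotNr m n (A B : 'M[R]_(m, n)) : mxdot A (- B) = - mxdot A B.
Proof. by rewrite -scaleN1r mxdotZr mulN1r. Qed.

Lemma mxdotNl m n (A B : 'M[R]_(m, n)) : mxdot (- B) A = - mxdot B A.
Proof. by rewrite !(mxdotC _ A) mxdotNr. Qed.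

Lemma mxdotBr m n (A B C : 'M[R]_(m, n)) : mxdot A (B - C) = mxdot A B - mxdot A C.
Proof. by rewrite mxdotDr mxdotNr. Qed.

Lemma mxdotBl m n (A B C : 'M[R]_(m, n)) : mxdot (B - C) A = mxdot B A - mxdot C A.
Proof. by rewrite mxdotDl mxdotNl. Qed.

Lemma mxdot0r m n (A : 'M[R]_(m, n)) : mxdot A 0 = 0.
Proof. by rewrite /mxdot mulmx0 mxtrace0. Qed.

Lemma mxdot0l m n (A : 'M[R]_(m, n)) : mxdot 0 A = 0.
Proof. by rewrite mxdotC mxdot0r. Qed.

Lemma mxdot_sqE m n (A : 'M[R]_(m, n)) : mxdot A A = \sum_i \sum_j A i j ^+ 2.
Proof. by rewrite mxdotE; apply: eq_bigr => i _; apply: eq_bigr => j _; rewrite expr2. Qed.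

Lemma mxdot_ge0 m n (A : 'M[R]_(m, n)) : 0 <= mxdot A A.
Proof. by rewrite mxdot_sqE; apply: sumr_ge0 => i _; apply: sumr_ge0 => j _; apply: sqr_ge0. Qed.

Lemma mxdot_eq0 m n (A : 'M[R]_(m, n)) : mxdot A A = 0 -> A = 0.
Proof.
rewrite mxdot_sqE => H; apply/matrixP => i j.
have Hi := @psumr_eq0P _ _ predT _ (fun i _ => sumr_ge0 _ (fun j _ => sqr_ge0 (A i j))) H i isT.
by rewrite mxE; apply: (sum_sq0 Hi).
Qed.

Lemma frobE m n (A : 'M[R]_(m, n)) : frob A = Num.sqrt (mxdot A A).
Proof. by rewrite mxdot_sqE. Qed.

Lemma frob_ge0 m n (A : 'M[R]_(m, n)) : 0 <= frob A.
Proof. exact: sqrtr_ge0. Qed.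

Lemma sqr_frob m n (A : 'M[R]_(m, n)) : frob A ^+ 2 = mxdot A A.
Proof. by rewrite frobE sqr_sqrtr // mxdot_ge0. Qed.

Lemma frobZ m n c (A : 'M[R]_(m, n)) : frob (c *: A) = `|c| * frob A.
Proof.
by rewrite !frobE mxdotZl mxdotZr mulrA -expr2 sqrtrM ?sqr_ge0 // sqrtr_sqr.
Qed.

Lemma frob_le m n (A B : 'M[R]_(m, n)) : mxdot A A <= mxdot B B -> frob A <= frob B.
Proof. by move=> H; rewrite !frobE ler_sqrt // mxdot_ge0. Qed.

Lemma frob_eq0 m n (A : 'M[R]_(m, n)) : frob A = 0 -> A = 0.
Proof.
move=> H; apply: mxdot_eq0; rewrite -sqr_frob H expr0n //.
Qed.

Lemma Mx_bound n (A : 'M[R]_n) (x : 'cV[R]_n) : vnorm (A *m x) <= frob A * vnorm x.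
Proof.
rewrite !vnormE frobE -sqrtrM ?mxdot_ge0 // ler_sqrt; last first.
  by rewrite mulr_ge0 ?mxdot_ge0 ?nsq_ge0.
rewrite nsqE mxdot_sqE mulr_suml; apply: ler_sum => i _.
rewrite mxE.
have h1 := CS_sum (fun j => A i j) (fun j => x j 0).
have h2 := CS_sum (fun j => - A i j) (fun j => x j 0).
move: h1 h2 => /=.
have -> : \sum_j - A i j * x j 0 = - \sum_j A i j * x j 0.
  by rewrite -sumrN; apply: eq_bigr => j _; rewrite mulNr.
have -> : \sum_j (- A i j) ^+ 2 = \sum_j A i j ^+ 2 by apply: eq_bigr => j _; rewrite sqrrN.
set s := \sum_j _ * _.
set a := Num.sqrt (\sum_j A i j ^+ 2); set b := Num.sqrt (\sum_j x j 0 ^+ 2).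
move=> h1 h2.
have ha : a ^+ 2 = \sum_j A i j ^+ 2 by rewrite sqr_sqrtr // sumr_ge0 // => j _; apply: sqr_ge0.
have hb : b ^+ 2 = nsq x by rewrite nsqE sqr_sqrtr // sumr_ge0 // => j _; apply: sqr_ge0.
rewrite -ha -hb -exprMn.
have ab0 : 0 <= a * b by rewrite mulr_ge0 ?sqrtr_ge0.
rewrite -[s ^+ 2]real_normK ?num_real // ler_pXn2r ?nnegrE //.
by rewrite ler_norml h1 andbT lerNl.
Qed.

Lemma specnorm_bound n (W : 'M[R]_n) (x : 'cV[R]_n) :
  vnorm (W *m x) <= specnorm W * vnorm x.
Proof.
have [x0|xn0] := eqVneq x 0.
  by rewrite x0 mulmx0 !vnormE /nsq !mxE big1 ?sqrtr0 ?mulr0 // => i _; rewrite !mxE mul0r.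
have c_gt0 : 0 < vnorm x.
  rewrite lt0r vnorm_ge0 andbT; apply/eqP => /eqP.
  rewrite vnormE sqrtr_eq0 => H.
  have : nsq x = 0 by apply/eqP; rewrite eq_le H nsq_ge0.
  by move/nsq_eq0; apply/eqP.
set c := vnorm x.
set y := c^-1 *: x.
have ny : vnorm y = 1 by rewrite vnormZ ger0_norm ?invr_ge0 ?ltW // mulVf ?gt_eqF.
have hs : has_sup [set vnorm (W *m x) | x in [set x : 'cV[R]_n | vnorm x = 1]].
  split; first by exists (vnorm (W *m y)), y.
  exists (frob W) => _ [z /= nz <-].
  by rewrite -[frob W]mulr1 -nz Mx_bound.
have key : vnorm (W *m y) <= specnorm W by apply: (sup_upper_bound hs); exists y.
have key2 : c^-1 * vnorm (W *m x) <= specnorm W.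
  by move: key; rewrite /y -scalemxAr vnormZ ger0_norm // invr_ge0 ltW.
by rewrite -[vnorm (W *m x)](mulVKf (lt0r_neq0 c_gt0)) [_ * c]mulrC ler_wpM2l // ltW.
Qed.

End Frob.

End MD.
Import MD.

Module ME.
Set Implicit Arguments. Unset Strict Implicit. Unset Printing Implicit Defensive.
Local Open Scope ring_scope.
Local Open Scope classical_set_scope.

Section TSpace.
Variable R : realType.
Variables (n r : nat) (U V : 'M[R]_(n, r)).
Hypotheses (UU : U^T *m U = 1%:M) (VV : V^T *m V = 1%:M).

Lemma inT0 : inT U V 0.
Proof. by exists 0, 0; rewrite trmx0 !mulmx0 mul0mx addr0. Qed.

Lemma inTD P Q : inT U V P -> inT U V Q -> inT U V (P + Q).
Proof.
move=> [X1 [Y1 ->]] [X2 [Y2 ->]]; exists (X1 + X2), (Y1 + Y2).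
by rewrite linearD /= mulmxDr mulmxDl addrACA.
Qed.

Lemma inTZ c P : inT U V P -> inT U V (c *: P).
Proof.
move=> [X [Y ->]]; exists (c *: X), (c *: Y).
by rewrite linearZ /= -scalemxAr -scalemxAl scalerDr.
Qed.

Lemma inTB P Q : inT U V P -> inT U V Q -> inT U V (P - Q).
Proof. by move=> hP hQ; apply: inTD => //; rewrite -scaleN1r; apply: inTZ. Qed.

Lemma perp_dot G Q : U^T *m G = 0 -> G *m V = 0 -> inT U V Q -> mxdot G Q = 0.
Proof.
move=> UG GV [X [Y ->]]; rewrite mxdotDr /mxdot.
have -> : G^T *m (U *m X^T) = (U^T *m G)^T *m X^T by rewrite trmx_mul trmxK mulmxA.
rewrite UG trmx0 mul0mx mxtrace0 add0r.
by rewrite mulmxA mxtrace_mulC mulmxA -trmx_mul GV trmx0 mul0mx mxtrace0.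
Qed.

Lemma PT_spec M : inT U V (PT U V M) /\
  forall Q, inT U V Q -> mxdot (M - PT U V M) Q = 0.
Proof.
suff ex : exists P, inT U V P /\ (forall Q, inT U V Q -> mxdot (M - P) Q = 0).
  exact: (xgetPex 0 ex).
set Pf := U *m (U^T *m M) + (1%:M - U *m U^T) *m M *m V *m V^T.
exists Pf; split.
  by exists (M^T *m U), ((1%:M - U *m U^T) *m M *m V); rewrite trmx_mul trmxK.
have E : M - Pf = (1%:M - U *m U^T) *m M *m (1%:M - V *m V^T).
  rewrite /Pf mulmxBr mulmx1 !mulmxA opprD addrA.
  by congr (_ - _); rewrite mulmxBl mul1mx.
have UP : U^T *m (1%:M - U *m U^T) = 0.
  by rewrite mulmxBr mulmx1 mulmxA UU mul1mx subrr.
have VP : (1%:M - V *m V^T) *m V = 0.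
  by rewrite mulmxBl mul1mx -mulmxA VV mulmx1 subrr.
move=> Q hQ; apply: perp_dot => //; rewrite E.
  by rewrite !mulmxA UP !mul0mx.
by rewrite -[_ *m (1%:M - V *m V^T) *m V]mulmxA VP mulmx0.
Qed.

Lemma PT_eq M P : inT U V P -> (forall Q, inT U V Q -> mxdot (M - P) Q = 0) ->
  PT U V M = P.
Proof.
move=> hP hO; have [h1 h2] := PT_spec M.
have hD : inT U V (PT U V M - P) by apply: inTB.
apply/eqP; rewrite -subr_eq0; apply/eqP; apply: mxdot_eq0.
have E' : PT U V M - P = (M - P) - (M - PT U V M).
  by rewrite (opprB M) [X in _ = X]addrC addrA subrK.
by rewrite {1}E' mxdotBl (hO _ hD) (h2 _ hD) subrr.
Qed.

Lemma PT_id M : inT U V M -> PT U V M = M.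
Proof. by move=> hM; apply: PT_eq => // Q _; rewrite subrr mxdot0l. Qed.

Lemma PT_frob M : frob (PT U V M) <= frob M.
Proof.
have [h1 h2] := PT_spec M; set P := PT U V M in h1 h2 *.
apply: frob_le.
have -> : mxdot M M = mxdot ((M - P) + P) ((M - P) + P) by rewrite subrK.
rewrite mxdotDl (mxdotDr (M - P) (M - P) P) (mxdotDr P (M - P) P) (h2 _ h1) (mxdotC P (M - P)) (h2 _ h1).
by have := mxdot_ge0 (M - P); lra.
Qed.

Lemma PT0 W : PT U V W = 0 -> U^T *m W = 0 /\ W *m V = 0.
Proof.
move=> hW; have [_ h2] := PT_spec W; rewrite hW subr0 in h2.
split; apply: mxdot_eq0.
  have := h2 (U *m (U^T *m W)).
  rewrite /mxdot trmx_mul mulmxA => <-; last first.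
    by exists (W^T *m U), 0; rewrite mul0mx addr0 trmx_mul trmxK mulmxA.
  by rewrite trmxK !mulmxA.
have := h2 (W *m V *m V^T).
rewrite /mxdot trmx_mul => <-; last first.
  by exists 0, (W *m V); rewrite trmx0 mulmx0 add0r.
by rewrite (mulmxA W^T) (mulmxA W^T) (mxtrace_mulC (W^T *m W *m V)) !mulmxA.
Qed.

Lemma PAperpE (G : {set 'I_n * 'I_n}) (X : 'M[R]_n) i j :
  PAperp G X i j = if (i, j) \in G then 0 else X i j.
Proof. by rewrite /PAperp /PA !mxE; case: ifP; rewrite ?subrr ?subr0. Qed.

Lemma frob_PAperp (G : {set 'I_n * 'I_n}) (X : 'M[R]_n) : frob (PAperp G X) <= frob X.
Proof.
apply: frob_le; rewrite !mxdot_sqE; apply: ler_sum => i _; apply: ler_sum => j _.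
by rewrite PAperpE; case: ifP; rewrite ?expr0n ?sqr_ge0.
Qed.

Lemma opnorm_T0 (G : {set 'I_n * 'I_n}) (H : 'M[R]_n) :
  opnorm_frob (fun M => PAperp G (PT U V M)) < 1 -> inT U V H ->
  (forall i j, (i, j) \in G -> H i j = 0) -> H = 0.
Proof.
move=> hop hH hG; apply: frob_eq0.
have [->//|hn] := eqVneq (frob H) 0.
have c_gt0 : 0 < frob H by rewrite lt0r hn frob_ge0.
set M := (frob H)^-1 *: H.
have fM : frob M = 1 by rewrite frobZ ger0_norm ?invr_ge0 ?ltW // mulVf.
have PM : PAperp G (PT U V M) = M.
  rewrite PT_id; last by apply: inTZ.
  apply/matrixP => i j; rewrite PAperpE; case: ifP => // ijG.
  by rewrite mxE hG // mulr0.
have hs : has_sup [set frob ((fun M => PAperp G (PT U V M)) M) | M in [set M : 'M[R]_n | frob M <= 1]].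
  split; first by exists 1, M => //=; rewrite ?PM ?fM.
  exists 1 => _ [N /= nN <-].
  by apply: le_trans (frob_PAperp _ _) _; apply: le_trans (PT_frob _) _.
have : 1 <= opnorm_frob (fun M => PAperp G (PT U V M)).
  by apply: (sup_upper_bound hs); exists M => //=; rewrite ?PM ?fM.
by move=> h; move: (le_lt_trans h hop); rewrite ltxx.
Qed.

Lemma decompT M :
  inT U V (M - (1%:M - U *m U^T) *m M *m (1%:M - V *m V^T)) /\
  U^T *m ((1%:M - U *m U^T) *m M *m (1%:M - V *m V^T)) = 0 /\
  ((1%:M - U *m U^T) *m M *m (1%:M - V *m V^T)) *m V = 0.
Proof.
set Pf := U *m (U^T *m M) + (1%:M - U *m U^T) *m M *m V *m V^T.
have E : M - Pf = (1%:M - U *m U^T) *m M *m (1%:M - V *m V^T).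
  rewrite /Pf mulmxBr mulmx1 !mulmxA opprD addrA.
  by congr (_ - _); rewrite mulmxBl mul1mx.
have UP : U^T *m (1%:M - U *m U^T) = 0.
  by rewrite mulmxBr mulmx1 mulmxA UU mul1mx subrr.
have VP : (1%:M - V *m V^T) *m V = 0.
  by rewrite mulmxBl mul1mx -mulmxA VV mulmx1 subrr.
split; last split.
- rewrite -E opprB addrC subrK.
  by exists (M^T *m U), ((1%:M - U *m U^T) *m M *m V); rewrite trmx_mul trmxK.
- by rewrite !mulmxA UP !mul0mx.
- by rewrite -[_ *m (1%:M - V *m V^T) *m V]mulmxA VP mulmx0.
Qed.

End TSpace.

End ME.
Import ME.

Unset Implicit Arguments.
Local Open Scope ring_scope.

Theorem lemma7p1 (R : realType) (n r : nat)
  (L0 : 'M[R]_n) (U V : 'M[R]_(n, r)) (sigma : 'rV[R]_r)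
  (lambda : R) (Omega_obs Omega : {set 'I_n * 'I_n}) (S0' : 'M[R]_n) :
  (* reduced SVD L0 = U Sigma V^* *)
  U^T *m U = 1%:M -> V^T *m V = 1%:M ->
  (forall k, 0 < sigma 0 k) ->
  L0 = U *m diag_mx sigma *m V^T ->
  0 < lambda ->
  Omega \subset Omega_obs ->
  (* S0' supported on Omega *)
  (forall i j, (i, j) \notin Omega -> S0' i j = 0) ->
  (* ||P_{Gamma^perp} P_T|| < 1, Gamma = Omega_obs \ Omega *)
  opnorm_frob (fun M => PAperp (Omega_obs :\: Omega) (PT U V M)) < 1 ->
  (* dual certificate *)
  (exists W F : 'M[R]_n,
     U *m V^T + W = lambda *: (sgnmx S0' + F) /\
     PT U V W = 0 /\ specnorm W < 1 /\
     PAperp (Omega_obs :\: Omega) F = 0 /\ linfnorm F < 1) ->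
  (* (L0, S0') is the unique minimizer *)
  (PA Omega_obs (L0 + S0') = PA Omega_obs L0 + S0' /\
   forall L S : 'M[R]_n,
     PA Omega_obs (L + S) = PA Omega_obs L0 + S0' ->
     (L, S) <> (L0, S0') ->
     nucnorm L0 + lambda * l1norm S0' < nucnorm L + lambda * l1norm S).
Proof.
move=> UU VV sg L0e lam_gt0 sub suppS hop [W [F [cert [PTW [sW [PF linF]]]]]].
set Gam := Omega_obs :\: Omega in hop PF.
have inObs : forall i j, (i, j) \notin Omega_obs -> (i, j) \notin Omega.
  by move=> i j; apply: contra => /(fintype.subsetP sub).
have Fsupp : forall i j, (i, j) \notin Gam -> F i j = 0.
  move=> i j ijG; move/matrixP: PF => /(_ i j).
  by rewrite PAperpE (negPf ijG) mxE.
have Fbd : forall i j, `|F i j| < 1.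
  move=> i j; apply: le_lt_trans linF.
  apply: le_trans (le_bigmax _ _ i).
  exact: (le_bigmax _ (fun j => `|F i j|) j).
split.
  apply/matrixP => i j; rewrite !mxE.
  case: ifP => ij; first by [].
  by rewrite suppS ?add0r ?addr0 ?inObs ?ij.
move=> L S feas neq.
have feasE : forall i j, (i, j) \in Omega_obs -> L i j + S i j = L0 i j + S0' i j.
  move=> i j ij; move/matrixP: feas => /(_ i j); rewrite !mxE ij.
  by move=> ->.
have [UW WV] := PT0 UU VV PTW.
set H := L - L0.
have [HT [UG GV]] := decompT UU VV H.
set G := (1%:M - U *m U^T) *m H *m (1%:M - V *m V^T) in HT UG GV.
set s := specnorm W.
set g := frob G.
pose eps := if g == 0 then 0 else (1 - s) / g.
have eps_ge0 : 0 <= eps.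
  rewrite /eps; case: ifP => // g0; rewrite divr_ge0 ?frob_ge0 //.
  by rewrite subr_ge0 ltW.
have eps_le : s + eps * g <= 1.
  rewrite /eps; case: ifP => [/eqP -> | g0]; first by rewrite mul0r addr0 ltW.
  by rewrite divfK ?g0 // addrC subrK.
have eps_gt0 : G != 0 -> 0 < eps.
  move=> Gn0; rewrite /eps ifF; last first.
    by apply/negP => /eqP /frob_eq0 /eqP; apply/negP.
  rewrite divr_gt0 ?subr_gt0 // lt0r frob_ge0 andbT.
  by apply/negP => /eqP /frob_eq0 /eqP; apply/negP.
set W0 := W + eps *: G.
have UW0 : U^T *m W0 = 0 by rewrite mulmxDr UW -scalemxAr UG scaler0 addr0.
have W0V : W0 *m V = 0 by rewrite mulmxDl WV -scalemxAl GV scaler0 addr0.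
have W0b : forall y, vnorm (W0 *m y) <= vnorm y.
  move=> y; rewrite mulmxDl; apply: le_trans (vnormD _ _) _.
  rewrite -scalemxAl vnormZ ger0_norm //.
  apply: le_trans (lerD (specnorm_bound W y) (ler_wpM2l eps_ge0 (Mx_bound G y))) _.
  rewrite -/s -/g mulrA -mulrDl -{2}(mul1r (vnorm y)).
  by apply: ler_wpM2r => //; apply: vnorm_ge0.
set Z := U *m V^T + W0.
have Zb : forall x, vnorm (Z *m x) <= vnorm x.
  move=> x; rewrite !vnormE ler_sqrt ?nsq_ge0 //.
  set a := V^T *m x.
  set y := x - V *m a.
  have Zx : Z *m x = U *m a + W0 *m y.
    by rewrite /Z /y mulmxDl mulmxA mulmxBr mulmxA W0V mul0mx subr0.
  have xe : x = V *m a + y by rewrite /y addrC subrK.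
  have ay : (V *m a)^T *m y = 0.
    by rewrite /y trmx_mul mulmxBr -[a^T *m V^T *m x]mulmxA -/a (mulmxA (a^T *m V^T)) -(mulmxA a^T V^T) VV mulmx1 subrr.
  have ua : (U *m a)^T *m (W0 *m y) = 0.
    by rewrite trmx_mul -mulmxA (mulmxA U^T) UW0 mul0mx mulmx0.
  have nUa : nsq (U *m a) = nsq a by rewrite /nsq trmx_mul -mulmxA (mulmxA U^T) UU mul1mx.
  have nVa : nsq (V *m a) = nsq a by rewrite /nsq trmx_mul -mulmxA (mulmxA V^T) VV mul1mx.
  have nW : nsq (W0 *m y) <= nsq y.
    rewrite -!sqr_vnorm ler_pXn2r ?nnegrE ?vnorm_ge0 //.
  clearbody a y; rewrite Zx (_ : nsq x = nsq (V *m a + y)); last by rewrite -xe.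
  rewrite !nsqD ua ay !mxE nUa nVa.
  lra.
have W0e : W0 = W + eps *: G by [].
clearbody W0 G.
have nucL : mxdot Z L <= nucnorm L := nuc_ge L Zb.
have W0U : W0^T *m U = 0 by rewrite -(trmxK U) -trmx_mul UW0 trmx0.
have ZL0 : mxdot Z L0 = \sum_k sigma 0 k.
  rewrite /Z L0e mxdotDl {2}/mxdot !mulmxA W0U !mul0mx mxtrace0 addr0.
  rewrite /mxdot trmx_mul trmxK !mulmxA -[V *m U^T *m U]mulmxA UU mulmx1.
  by rewrite mxtrace_mulC mulmxA VV mul1mx mxtrace_diag.
have nucL0 : nucnorm L0 = \sum_k sigma 0 k.
  by rewrite L0e nuc_svd // => k; apply: ltW.
have GH : mxdot G H = mxdot G G.
  have -> : H = G + (H - G) by rewrite addrC subrK.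
  by rewrite mxdotDr (perp_dot UG GV HT) addr0.
have ZH : mxdot Z H = lambda * mxdot (sgnmx S0' + F) H + eps * mxdot G G.
  by rewrite /Z W0e addrA cert (mxdotDl H (lambda *: (sgnmx S0' + F))) !mxdotZl GH.
have LH : L = L0 + H by rewrite /H addrC subrK.
set T := fun i j => (sgnmx S0' + F) i j * H i j + `|S i j| - `|S0' i j|.
have Tsum : mxdot (sgnmx S0' + F) H + l1norm S - l1norm S0' = \sum_i \sum_j T i j.
  rewrite mxdotE /l1norm -big_split -sumrB /=; apply: eq_bigr => i _.
  by rewrite -big_split -sumrB /=.
pose c := fun i j => if (i, j) \in Omega then 0 else (1 - `|F i j|) * `|S i j|.
have c_ge0 : forall i j, 0 <= c i j.
  move=> i j; rewrite /c; case: ifP => // _.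
  by rewrite mulr_ge0 // subr_ge0 ltW.
have cT : forall i j, c i j <= T i j.
  move=> i j; rewrite /c /T !mxE.
  case: (boolP ((i, j) \in Omega)) => hO.
    have hobs : (i, j) \in Omega_obs by apply: (fintype.subsetP sub).
    rewrite Fsupp ?addr0; last by rewrite finset.in_setD hO.
    have := feasE i j hobs => fe.
    have -> : L i j - L0 i j = S0' i j - S i j by lra.
    rewrite mulrBr -normrEsg.
    have : Num.sg (S0' i j) * S i j <= `|S i j|.
      apply: le_trans (ler_norm _) _; rewrite normrM normr_sg.
      by case: (_ != 0); rewrite ?mul1r ?mul0r.
    lra.
  rewrite suppS // sgr0 normr0 add0r subr0.
  case: (boolP ((i, j) \in Gam)) => hG; last first.
    by rewrite Fsupp // normr0 subr0 mul1r mul0r add0r.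
  have hobs : (i, j) \in Omega_obs by move: hG; rewrite finset.in_setD => /andP [].
  have := feasE i j hobs; rewrite suppS // addr0 => fe.
  have -> : L i j - L0 i j = - S i j by lra.
  have : F i j * S i j <= `|F i j| * `|S i j| by rewrite -normrM; apply: ler_norm.
  rewrite mulrN mulrBl mul1r; lra.
rewrite ltNge; apply/negP => Hle.
have sumT : \sum_i \sum_j c i j <= \sum_i \sum_j T i j.
  by apply: ler_sum => i _; apply: ler_sum => j _; apply: cT.
have sumc_ge0 : 0 <= \sum_i \sum_j c i j.
  by apply: sumr_ge0 => i _; apply: sumr_ge0 => j _; apply: c_ge0.
have GG_ge0 : 0 <= eps * mxdot G G by rewrite mulr_ge0 ?mxdot_ge0.
have f1 : mxdot Z L = mxdot Z L0 + mxdot Z H by rewrite LH mxdotDr.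
have f3 : lambda * \sum_i \sum_j c i j <=
          lambda * mxdot (sgnmx S0' + F) H + lambda * l1norm S - lambda * l1norm S0'.
  by rewrite -mulrDr -mulrBr Tsum ler_wpM2l // ltW.
have key : lambda * \sum_i \sum_j c i j + eps * mxdot G G <= 0 by lra.
have lc_ge0 : 0 <= lambda * \sum_i \sum_j c i j by rewrite mulr_ge0 // ltW.
have sc0 : \sum_i \sum_j c i j = 0.
  have : lambda * \sum_i \sum_j c i j = 0 by lra.
  by move/eqP; rewrite mulf_eq0 (gt_eqF lam_gt0) /= => /eqP.
have c0 : forall i j, c i j = 0.
  move=> i j.
  have h1 := @psumr_eq0P _ _ predT _ (fun i _ => sumr_ge0 _ (fun j _ => c_ge0 i j)) sc0 i isT.
  exact: (@psumr_eq0P _ _ predT _ (fun j _ => c_ge0 i j) h1 j isT).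
have S0 : forall i j, (i, j) \notin Omega -> S i j = 0.
  move=> i j hO; have := c0 i j; rewrite /c (negPf hO) => /eqP.
  rewrite mulf_eq0 normr_eq0 subr_eq0 => /orP [/eqP h|/eqP //].
  by have := Fbd i j; rewrite -h ltxx.
have G0 : G = 0.
  have [//|Gn0] := eqVneq G 0; exfalso.
  have : 0 < eps * mxdot G G.
    apply: mulr_gt0; first exact: eps_gt0.
    rewrite lt0r mxdot_ge0 andbT.
    by apply/negP => /eqP /mxdot_eq0 /eqP; apply/negP.
  lra.
rewrite G0 subr0 in HT.
have H0 : H = 0.
  apply: (opnorm_T0 UU VV hop HT) => i j hG.
  have hobs : (i, j) \in Omega_obs by move: hG; rewrite finset.in_setD => /andP [].
  have hO : (i, j) \notin Omega by move: hG; rewrite finset.in_setD => /andP [].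
  have := feasE i j hobs; rewrite suppS // S0 // !mxE => fe.
  lra.
apply: neq.
have LL : L = L0 by rewrite LH H0 addr0.
suff -> : S = S0' by rewrite LL.
apply/matrixP => i j.
case: (boolP ((i, j) \in Omega)) => hO; last by rewrite S0 // suppS.
have hobs : (i, j) \in Omega_obs by apply: (fintype.subsetP sub).
have := feasE i j hobs; rewrite LL; lra.
Qed.
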